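(* Let $X,X_1,X_2,\dots$ be random variables in a sub-linear expectation space $(\Omega,\mathscr H,\hat{\mathbb E})$ with $\{X_n\}$ independent, $X_n\overset d=X$ for all $n$, and $\hat{\mathbb E}[X]=\hat{\mathcal E}[X]=0$. Let $S_n=\sum_{i=1}^nX_i$, $V_n^2=\sum_{i=1}^nX_i^2$, $l(x)=\hat{\mathbb E}[X^2\wedge x^2]$, and assume: (I) $\mathbb V(|X|\ge x)=o(x^{-2}l(x))$ as $x\to\infty$; (II) $\limsup_{x\to\infty}\hat{\mathbb E}[X^2\wedge x^2]/\hat{\mathcal E}[X^2\wedge x^2]<\infty$; (III) $\hat{\mathbb E}[(|X|-c)^+]\to0$ as $c\to\infty$; (IV) $x_n\to\infty$ and $x_n=o(\sqrt n)$. Let $b_0=\inf\{x\ge0:l(x)>0\}$ and $z_n=\inf\{s\ge b_0+1: l(s)/s^2\le x_n^2/n\}$. Then for every $0<\delta<1$, as $n\to\infty$, $$\mathbb V\big(S_n\ge x_nV_n,\ \delta nl(z_n)\le V_n^2\le 9nl(z_n)\big)\le\exp\Big\{-\frac{x_n^2}{2}+o(x_n^2)\Big\}.$$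
   Context: Sub-linear expectation space: $\mathscr H$ is a linear space of real functions on a measurable space $(\Omega,\mathcal F)$, closed under $\varphi(X_1,\dots,X_n)$ for $\varphi$ bounded continuous or locally Lipschitz with polynomial growth; $\hat{\mathbb E}:\mathscr H\to[-\infty,\infty]$ is monotone, constant preserving, sub-additive and positively homogeneous. $\hat{\mathcal E}[X]=-\hat{\mathbb E}[-X]$; $\mathbb V(A)=\inf\{\hat{\mathbb E}[\xi]:I_A\le\xi,\xi\in\mathscr H\}$. Independence: $\mathbf Y$ is independent of $\mathbf X$ if $\hat{\mathbb E}[\varphi(\mathbf X,\mathbf Y)]=\hat{\mathbb E}[\hat{\mathbb E}[\varphi(\mathbf x,\mathbf Y)]|_{\mathbf x=\mathbf X}]$ for all locally Lipschitz $\varphi$ of polynomial growth (whenever the relevant expectations are finite); $\{X_n\}$ is independent if $X_{i+1}$ is independent of $(X_1,\dots,X_i)$ for each $i$. $X_n\overset d=X$ means $\hat{\mathbb E}[\varphi(X_n)]=\hat{\mathbb E}[\varphi(X)]$ for all such $\varphi$. $a\wedge b=\min(a,b)$. *)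

(* Defs.v *)
From Stdlib Require Import Reals Lra.
From Coquelicot Require Import Coquelicot.
Open Scope R_scope.

(** Vectors of R^n are encoded as [nat -> R]; a function on R^n is a
    function [(nat -> R) -> R] depending only on the first n coordinates. *)
Definition depends_on (n : nat) (phi : (nat -> R) -> R) : Prop :=
  forall x y : nat -> R, (forall i, (i < n)%nat -> x i = y i) -> phi x = phi y.

Fixpoint nmax (n : nat) (x : nat -> R) : R :=
  match n with
  | O => 0
  | S k => Rmax (nmax k x) (Rabs (x k))
  end.

Definition vsub (x y : nat -> R) : nat -> R := fun i => x i - y i.

Definition Cb (n : nat) (phi : (nat -> R) -> R) : Prop :=
  depends_on n phi /\
  (exists M, forall x, Rabs (phi x) <= M) /\
  (forall x eps, 0 < eps -> exists d, 0 < d /\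
      forall y, nmax n (vsub x y) < d -> Rabs (phi x - phi y) < eps).

Definition Clip (n : nat) (phi : (nat -> R) -> R) : Prop :=
  depends_on n phi /\
  exists (C : R) (m : nat), 0 < C /\ forall x y,
    Rabs (phi x - phi y) <= C * (1 + nmax n x ^ m + nmax n y ^ m) * nmax n (vsub x y).

Definition Clip1 (phi : R -> R) : Prop :=
  exists (C : R) (m : nat), 0 < C /\ forall x y,
    Rabs (phi x - phi y) <= C * (1 + Rabs x ^ m + Rabs y ^ m) * Rabs (x - y).

Record SLE (Omega : Type) := {
  Hs : (Omega -> R) -> Prop;
  Eh : (Omega -> R) -> Rbar;
  Hs_lin : forall (a b : R) X Y, Hs X -> Hs Y -> Hs (fun w => a * X w + b * Y w);
  Hs_comp : forall (n : nat) (Xv : nat -> Omega -> R) (phi : (nat -> R) -> R),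
      (forall i, (i < n)%nat -> Hs (Xv i)) -> (Cb n phi \/ Clip n phi) ->
      Hs (fun w => phi (fun i => Xv i w));
  Eh_mono : forall X Y, Hs X -> Hs Y -> (forall w, X w <= Y w) -> Rbar_le (Eh X) (Eh Y);
  Eh_const : forall c : R, Eh (fun _ => c) = Finite c;
  Eh_subadd : forall X Y, Hs X -> Hs Y -> ex_Rbar_plus (Eh X) (Eh Y) ->
      Rbar_le (Eh (fun w => X w + Y w)) (Rbar_plus (Eh X) (Eh Y));
  Eh_poshom : forall (l : R) X, Hs X -> 0 < l ->
      Eh (fun w => l * X w) = Rbar_mult (Finite l) (Eh X)
}.
Arguments Hs {Omega}.
Arguments Eh {Omega}.

Definition Ecal {Omega} (S : SLE Omega) (X : Omega -> R) : Rbar :=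
  Rbar_opp (Eh S (fun w => - X w)).

Definition Vcap {Omega} (S : SLE Omega) (A : Omega -> Prop) : Rbar :=
  Rbar_glb (fun y => exists xi, Hs S xi /\
     (forall w, 0 <= xi w /\ (A w -> 1 <= xi w)) /\ y = Eh S xi).

Definition upd (x : nat -> R) (i : nat) (v : R) : nat -> R :=
  fun j => if Nat.eqb j i then v else x j.

(** {Xs 0, Xs 1, ...} (i.e. X_1, X_2, ...) is independent: for each i,
    Xs i is independent of (Xs 0, ..., Xs (i-1)). *)
Definition indep_seq {Omega} (S : SLE Omega) (Xs : nat -> Omega -> R) : Prop :=
  forall (i : nat) (phi : (nat -> R) -> R), Clip (Datatypes.S i) phi ->
    let h := fun x : nat -> R => Eh S (fun w => phi (upd x i (Xs i w))) in
    (forall x, is_finite (h x)) ->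
    Hs S (fun w => real (h (fun j => Xs j w))) ->
    Eh S (fun w => phi (fun j => Xs j w)) = Eh S (fun w => real (h (fun j => Xs j w))).

Definition ident_distr {Omega} (S : SLE Omega) (Y X : Omega -> R) : Prop :=
  forall phi : R -> R, Clip1 phi -> Eh S (fun w => phi (Y w)) = Eh S (fun w => phi (X w)).

(** l(x) = \hat E[X^2 /\ x^2] (finite by monotonicity/constant preservation) *)
Definition lfun {Omega} (S : SLE Omega) (X : Omega -> R) (x : R) : R :=
  real (Eh S (fun w => Rmin (X w ^ 2) (x ^ 2))).

Definition lcal {Omega} (S : SLE Omega) (X : Omega -> R) (x : R) : R :=
  real (Ecal S (fun w => Rmin (X w ^ 2) (x ^ 2))).

Definition b0 {Omega} (S : SLE Omega) (X : Omega -> R) : R :=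
  real (Glb_Rbar (fun x => 0 <= x /\ 0 < lfun S X x)).

Definition zseq {Omega} (S : SLE Omega) (X : Omega -> R) (xs : nat -> R) (n : nat) : R :=
  real (Glb_Rbar (fun s => b0 S X + 1 <= s /\ lfun S X s / s ^ 2 <= xs n ^ 2 / INR n)).

Fixpoint psum (f : nat -> R) (n : nat) : R :=
  match n with O => 0 | Datatypes.S k => psum f k + f k end.

Definition Ssum {Omega} (Xs : nat -> Omega -> R) (n : nat) (w : Omega) : R :=
  psum (fun i => Xs i w) n.
Definition V2sum {Omega} (Xs : nat -> Omega -> R) (n : nat) (w : Omega) : R :=
  psum (fun i => Xs i w ^ 2) n.

(* Main.v *)
Require Import Defs.
From Stdlib Require Import Reals.
From Coquelicot Require Import Coquelicot.
From Stdlib Require Import Lra Lia Psatz FunctionalExtensionality Classical_Prop.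
Open Scope R_scope.
Arguments Hs_lin {Omega}. Arguments Hs_comp {Omega}. Arguments Eh_mono {Omega}.
Arguments Eh_const {Omega}. Arguments Eh_subadd {Omega}. Arguments Eh_poshom {Omega}.

Lemma nmax_ge0 n x : 0 <= nmax n x.
Proof. induction n; simpl. lra. apply Rle_trans with (1:=IHn), Rmax_l. Qed.

Lemma nmax_ge n x i : (i < n)%nat -> Rabs (x i) <= nmax n x.
Proof.
  induction n; intros H. lia. simpl.
  destruct (Nat.eq_dec i n). subst. apply Rmax_r.
  apply Rle_trans with (nmax n x). apply IHn; lia. apply Rmax_l.
Qed.

Lemma nmax1 x : nmax 1 x = Rabs (x 0%nat).
Proof. simpl. apply Rmax_right. apply Rabs_pos. Qed.

Lemma Hs_const {Omega} (S : SLE Omega) (c : R) : Hs S (fun _ => c).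
Proof.
  apply (Hs_comp S 0 (fun _ _ => 0) (fun _ => c)). intros; lia.
  left. split; [|split].
  - intros x y _; reflexivity.
  - exists (Rabs c). intros; lra.
  - intros x eps He. exists 1. split. lra. intros. rewrite Rminus_diag, Rabs_R0. lra.
Qed.

Lemma Hs_clip1 {Omega} (S : SLE Omega) (Y : Omega -> R) (phi : R -> R) :
  Hs S Y -> Clip1 phi -> Hs S (fun w => phi (Y w)).
Proof.
  intros HY [C [m [HC Hphi]]].
  apply (Hs_comp S 1 (fun _ => Y) (fun v => phi (v 0%nat))). intros; auto.
  right. split.
  - intros x y H. rewrite (H 0%nat). reflexivity. lia.
  - exists C, m. split; auto. intros x y. rewrite !nmax1. apply Hphi.
Qed.

Lemma Eh_le_const {Omega} (S : SLE Omega) Y b : Hs S Y -> (forall w, Y w <= b) ->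
  Rbar_le (Eh S Y) (Finite b).
Proof. intros HY H. rewrite <- (Eh_const S b). apply Eh_mono; auto. apply Hs_const. Qed.

Lemma Eh_ge_const {Omega} (S : SLE Omega) Y a : Hs S Y -> (forall w, a <= Y w) ->
  Rbar_le (Finite a) (Eh S Y).
Proof. intros HY H. rewrite <- (Eh_const S a). apply Eh_mono; auto. apply Hs_const. Qed.

Lemma Eh_mono_le {Omega} (S : SLE Omega) Y Z a : Hs S Y -> Hs S Z -> (forall w, Y w <= Z w) ->
  Rbar_le (Eh S Z) (Finite a) -> Rbar_le (Eh S Y) (Finite a).
Proof. intros. eapply Rbar_le_trans. apply Eh_mono; eauto. auto. Qed.

Lemma Eh_fin {Omega} (S : SLE Omega) Y a b : Hs S Y -> (forall w, a <= Y w <= b) ->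
  Eh S Y = Finite (real (Eh S Y)) /\ a <= real (Eh S Y) <= b.
Proof.
  intros HY H.
  assert (H1 := Eh_ge_const S Y a HY (fun w => proj1 (H w))).
  assert (H2 := Eh_le_const S Y b HY (fun w => proj2 (H w))).
  destruct (Eh S Y); simpl in *; try contradiction; auto.
Qed.

Lemma Eh_add_le {Omega} (S : SLE Omega) Y Z a b : Hs S Y -> Hs S Z ->
  Rbar_le (Eh S Y) (Finite a) -> Rbar_le (Eh S Z) (Finite b) ->
  Rbar_le (Eh S (fun w => Y w + Z w)) (Finite (a + b)).
Proof.
  intros HY HZ H1 H2.
  assert (Hex : ex_Rbar_plus (Eh S Y) (Eh S Z)).
  { destruct (Eh S Y), (Eh S Z); simpl in *; auto. }
  eapply Rbar_le_trans. apply Eh_subadd; auto.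
  destruct (Eh S Y), (Eh S Z); simpl in *; try contradiction; auto; lra.
Qed.

Lemma Eh_scal_le {Omega} (S : SLE Omega) Y l a : Hs S Y -> 0 < l ->
  Rbar_le (Eh S Y) (Finite a) -> Rbar_le (Eh S (fun w => l * Y w)) (Finite (l * a)).
Proof.
  intros HY Hl H. rewrite Eh_poshom; auto.
  destruct (Eh S Y); simpl in *; try contradiction.
  apply Rmult_le_compat_l; lra.
  unfold Rbar_mult, Rbar_mult'. destruct (Rle_dec 0 l); try lra.
  destruct (Rle_lt_or_eq_dec 0 l r); simpl; auto. lra.
Qed.

Definition adm {Omega} (S : SLE Omega) (A : Omega -> Prop) xi :=
  Hs S xi /\ (forall w, 0 <= xi w /\ (A w -> 1 <= xi w)).

Lemma Vcap_le {Omega} (S : SLE Omega) A xi a : adm S A xi ->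
  Rbar_le (Eh S xi) (Finite a) -> Rbar_le (Vcap S A) (Finite a).
Proof.
  intros [H1 H2] H. unfold Vcap, Rbar_glb. destruct (Rbar_ex_glb _) as [l [Hlb Hg]]. simpl.
  eapply Rbar_le_trans; [|apply H]. apply Hlb. exists xi; auto.
Qed.

Lemma Vcap_use {Omega} (S : SLE Omega) A (e c b r : R) : 0 < b ->
  Rbar_le (Vcap S A) (Finite r) ->
  (forall xi v, adm S A xi -> Eh S xi = Finite v -> e <= c + b * v) ->
  e <= c + b * r.
Proof.
  intros Hb HV H.
  destruct (Rle_dec e (c + b*r)) as [|Hn]; auto. exfalso.
  unfold Vcap, Rbar_glb in HV. destruct (Rbar_ex_glb _) as [l [Hlb Hg]]. simpl in HV.
  assert (Hq : Rbar_le (Finite ((e - c)/b)) l).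
  { apply Hg. intros y [xi [Hxi [Ha Hy]]]. subst y.
    assert (H0 : Rbar_le (Finite 0) (Eh S xi)).
    { apply Eh_ge_const; auto. intros w; apply Ha. }
    destruct (Eh S xi) eqn:E; simpl in *; auto.
    specialize (H xi r0 (conj Hxi Ha) E).
    apply Rmult_le_reg_l with b; auto. field_simplify; lra. }
  assert (Rbar_le (Finite ((e-c)/b)) (Finite r)) by (eapply Rbar_le_trans; eauto).
  simpl in H0. apply Hn. apply Rmult_le_compat_l with (r:=b) in H0; [|lra].
  field_simplify in H0; lra.
Qed.

Definition tp (c t : R) := Rmax (Rabs t - c) 0.
Definition pc (b t : R) := Rmin (tp b t) b.

Lemma lip1_clip1 (phi : R -> R) : (forall x y, Rabs (phi x - phi y) <= Rabs (x - y)) -> Clip1 phi.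
Proof.
  intros H. exists 1, 0%nat. split. lra. intros x y. simpl.
  specialize (H x y). assert (0 <= Rabs (x-y)) by apply Rabs_pos. nra.
Qed.

Lemma Rmax0_lip a b : Rabs (Rmax a 0 - Rmax b 0) <= Rabs (a - b).
Proof. unfold Rmax. destruct (Rle_dec a 0), (Rle_dec b 0); unfold Rabs; repeat destruct Rcase_abs; lra. Qed.
Lemma Rmin_lip a b c : Rabs (Rmin a c - Rmin b c) <= Rabs (a - b).
Proof. unfold Rmin. destruct (Rle_dec a c), (Rle_dec b c); unfold Rabs; repeat destruct Rcase_abs; lra. Qed.
Lemma Rabs_lip a b : Rabs (Rabs a - Rabs b) <= Rabs (a - b).
Proof. unfold Rabs; repeat destruct Rcase_abs; lra. Qed.

Lemma clip1_tp c : Clip1 (tp c).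
Proof. apply lip1_clip1. intros x y. unfold tp. eapply Rle_trans. apply Rmax0_lip.
  replace (Rabs x - c - (Rabs y - c)) with (Rabs x - Rabs y) by ring. apply Rabs_lip. Qed.
Lemma clip1_pc b : Clip1 (pc b).
Proof. apply lip1_clip1. intros x y. unfold pc. eapply Rle_trans. apply Rmin_lip. unfold tp. eapply Rle_trans. apply Rmax0_lip.
  replace (Rabs x - b - (Rabs y - b)) with (Rabs x - Rabs y) by ring. apply Rabs_lip. Qed.
Lemma clip1_sqmin b : Clip1 (fun t => Rmin (t^2) (b^2)).
Proof.
  exists 1, 1%nat. split. lra. intros x y.
  eapply Rle_trans. apply Rmin_lip.
  replace (x^2 - y^2) with ((x+y)*(x-y)) by ring. rewrite Rabs_mult.
  apply Rmult_le_compat_r. apply Rabs_pos.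
  simpl. rewrite !Rmult_1_r. eapply Rle_trans. apply Rabs_triang. lra.
Qed.
Lemma clip1_id : Clip1 (fun t => t).
Proof. apply lip1_clip1. intros; lra. Qed.

Lemma Hs_tp {Omega} (S : SLE Omega) Y c : Hs S Y -> Hs S (fun w => tp c (Y w)).
Proof. intros; apply Hs_clip1; auto; apply clip1_tp. Qed.
Lemma Hs_pc {Omega} (S : SLE Omega) Y c : Hs S Y -> Hs S (fun w => pc c (Y w)).
Proof. intros; apply Hs_clip1; auto; apply clip1_pc. Qed.
Lemma Hs_sqmin {Omega} (S : SLE Omega) Y c : Hs S Y -> Hs S (fun w => Rmin (Y w ^2) (c^2)).
Proof. intros; apply (Hs_clip1 S Y (fun t => Rmin (t^2) (c^2))); auto; apply clip1_sqmin. Qed.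
Lemma Hs_plus {Omega} (S : SLE Omega) Y Z : Hs S Y -> Hs S Z -> Hs S (fun w => Y w + Z w).
Proof. intros. assert (H1 := Hs_lin S 1 1 Y Z H H0). eapply eq_ind. apply H1. simpl.
  apply functional_extensionality; intros; ring. Qed.
Lemma Hs_scal {Omega} (S : SLE Omega) Y a : Hs S Y -> Hs S (fun w => a * Y w).
Proof. intros. assert (H1 := Hs_lin S a 0 Y Y H H). eapply eq_ind. apply H1. simpl.
  apply functional_extensionality; intros; ring. Qed.

Lemma l_fin {Omega} (S : SLE Omega) X x : Hs S X ->
  Eh S (fun w => Rmin (X w ^ 2) (x ^ 2)) = Finite (lfun S X x) /\ 0 <= lfun S X x <= x^2.
Proof.
  intros HX. unfold lfun. apply Eh_fin. apply Hs_sqmin; auto.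
  intros w. split. apply Rmin_glb; apply pow2_ge_0. apply Rmin_r.
Qed.

Lemma l_mono {Omega} (S : SLE Omega) X a b : Hs S X -> 0 <= a <= b -> lfun S X a <= lfun S X b.
Proof.
  intros HX Hab. destruct (l_fin S X a HX) as [Ha _]. destruct (l_fin S X b HX) as [Hb _].
  assert (H := Eh_mono S _ _ (Hs_sqmin S X a HX) (Hs_sqmin S X b HX)).
  rewrite Ha, Hb in H. apply H. intros w. unfold Rmin.
  destruct (Rle_dec (X w ^ 2) (a^2)), (Rle_dec (X w ^ 2) (b^2)); nra.
Qed.

Lemma l_scale {Omega} (S : SLE Omega) X s t : Hs S X -> 0 < s <= t ->
  s^2 * lfun S X t <= t^2 * lfun S X s.
Proof.
  intros HX Hst. destruct (l_fin S X s HX) as [Ha _]. destruct (l_fin S X t HX) as [Hb _].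
  assert (Hp : 0 < t^2/s^2). { apply Rdiv_lt_0_compat; nra. }
  assert (H : Rbar_le (Eh S (fun w => Rmin (X w ^ 2) (t ^ 2))) (Finite (t^2/s^2 * lfun S X s))).
  { apply (Eh_mono_le S _ (fun w => t^2/s^2 * Rmin (X w ^ 2) (s ^ 2))). apply Hs_sqmin; auto. apply Hs_scal, Hs_sqmin; auto.
    2:{ apply Eh_scal_le. apply Hs_sqmin; auto. auto. rewrite Ha. simpl; lra. }
    intros w. cbv beta. unfold Rmin. destruct (Rle_dec (X w ^ 2) (s^2)), (Rle_dec (X w ^ 2) (t^2)).
    - assert (1 <= t^2/s^2). { apply Rmult_le_reg_r with (s^2). nra. unfold Rdiv; field_simplify; nra. }
      assert (0 <= X w ^2) by apply pow2_ge_0. nra.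
    - assert (1 <= t^2/s^2). { apply Rmult_le_reg_r with (s^2). nra. unfold Rdiv; field_simplify; nra. }
      assert (0 <= X w ^2) by apply pow2_ge_0. nra.
    - unfold Rdiv; field_simplify; nra.
    - unfold Rdiv; field_simplify; nra. }
  rewrite Hb in H. simpl in H.
  apply Rmult_le_compat_l with (r := s^2) in H; [|nra]. field_simplify in H; nra.
Qed.

Lemma adm_nonneg {Omega} (S : SLE Omega) A xi v : adm S A xi -> Eh S xi = Finite v -> 0 <= v.
Proof. intros [H1 H2] E. assert (H := Eh_ge_const S xi 0 H1 (fun w => proj1 (H2 w))). rewrite E in H. exact H. Qed.

Lemma l_double {Omega} (S : SLE Omega) X b r : Hs S X -> 0 < b ->
  Rbar_le (Vcap S (fun w => b <= Rabs (X w))) (Finite r) ->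
  lfun S X (2*b) <= lfun S X b + 3*b^2 * r.
Proof.
  intros HX Hb HV. apply (Vcap_use S (fun w => b <= Rabs (X w)) (lfun S X (2*b)) (lfun S X b) (3*b^2) r); [nra|exact HV|].
  intros xi v [Hxi Ha] Ev.
  destruct (l_fin S X (2*b) HX) as [H2 _]. destruct (l_fin S X b HX) as [H1 _].
  assert (H : Rbar_le (Eh S (fun w => Rmin (X w ^ 2) ((2*b) ^ 2))) (Finite (lfun S X b + 3*b^2*v))).
  { apply (Eh_mono_le S _ (fun w => Rmin (X w ^ 2) (b ^ 2) + 3*b^2 * xi w)). apply Hs_sqmin; auto. apply Hs_plus. apply Hs_sqmin; eauto. apply Hs_scal; eauto.
    2:{ apply Eh_add_le. apply Hs_sqmin; auto. apply Hs_scal; auto. rewrite H1; simpl; lra.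
        apply Eh_scal_le; auto. nra. rewrite Ev; simpl; lra. }
    intros w. cbv beta. destruct (Ha w) as [Ha1 Ha2].
    destruct (Rle_dec b (Rabs (X w))) as [Hl|Hl].
    - specialize (Ha2 Hl). assert (b^2 <= X w ^2). { rewrite <- (pow2_abs (X w)). nra. }
      unfold Rmin. destruct (Rle_dec (X w ^ 2) (b^2)), (Rle_dec (X w ^ 2) ((2*b)^2)); nra.
    - assert (X w ^2 <= b^2). { rewrite <- (pow2_abs (X w)). assert (0 <= Rabs (X w)) by apply Rabs_pos. nra. }
      unfold Rmin. destruct (Rle_dec (X w ^ 2) (b^2)), (Rle_dec (X w ^ 2) ((2*b)^2)); nra. }
  rewrite H2 in H. exact H.
Qed.

Lemma pow2_ge_INR K : INR K <= 2^K.
Proof. induction K. simpl; lra. rewrite S_INR. simpl.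
  assert (1 <= 2^K) by (apply pow_R1_Rle; lra). lra. Qed.

Lemma pow2_unbounded y : exists K : nat, y <= 2^K.
Proof. destruct (INR_unbounded y) as [K HK]. exists K. pose proof (pow2_ge_INR K). lra. Qed.

Definition Ep {Omega} (S : SLE Omega) X c := real (Eh S (fun w => tp c (X w))).

Lemma Ep_fin {Omega} (S : SLE Omega) X : Hs S X ->
  (forall eps, 0 < eps -> exists M, forall c, M <= c ->
      Rbar_le (Eh S (fun w => Rmax (Rabs (X w) - c) 0)) (Finite eps)) ->
  forall c, Eh S (fun w => tp c (X w)) = Finite (Ep S X c) /\ 0 <= Ep S X c.
Proof.
  intros HX H3 c. destruct (H3 1 ltac:(lra)) as [M HM].
  specialize (HM (Rmax M c) (Rmax_l _ _)).
  assert (Hup : Rbar_le (Eh S (fun w => tp c (X w))) (Finite (1 + Rabs (Rmax M c - c)))).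
  { apply (Eh_mono_le S _ (fun w => tp (Rmax M c) (X w) + Rabs (Rmax M c - c))).
    apply Hs_tp; auto. apply Hs_plus. apply Hs_tp; auto. apply Hs_const.
    intros w. assert (c <= Rmax M c) by apply Rmax_r. rewrite (Rabs_right (Rmax M c - c)) by lra.
    generalize (Rmax M c) H. intros m Hm. unfold tp, Rmax. repeat destruct Rle_dec; lra.
    apply Eh_add_le. apply Hs_tp; auto. apply Hs_const. exact HM. rewrite Eh_const. simpl; lra. }
  assert (Hlo : Rbar_le (Finite 0) (Eh S (fun w => tp c (X w)))).
  { apply Eh_ge_const. apply Hs_tp; auto. intros; unfold tp; apply Rmax_r. }
  unfold Ep. destruct (Eh S (fun w => tp c (X w))); simpl in *; try contradiction. auto.
Qed.

Lemma pc_bound {Omega} (S : SLE Omega) X b r : Hs S X -> 0 < b ->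
  Rbar_le (Vcap S (fun w => b <= Rabs (X w))) (Finite r) ->
  Eh S (fun w => pc b (X w)) = Finite (real (Eh S (fun w => pc b (X w)))) /\
  real (Eh S (fun w => pc b (X w))) <= b * r.
Proof.
  intros HX Hb HV.
  destruct (Eh_fin S (fun w => pc b (X w)) 0 b) as [E1 _]. apply Hs_pc; auto.
  { intros w. unfold pc, tp. split. apply Rmin_glb. apply Rmax_r. lra. apply Rmin_r. }
  split; auto.
  replace (b * r) with (0 + b * r) by ring.
  apply (Vcap_use S (fun w => b <= Rabs (X w))); auto.
  intros xi v [Hxi Ha] Ev.
  assert (H : Rbar_le (Eh S (fun w => pc b (X w))) (Finite (b * v))).
  { apply (Eh_mono_le S _ (fun w => b * xi w)). apply Hs_pc; auto. apply Hs_scal; auto.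
    intros w. destruct (Ha w) as [Ha1 Ha2]. destruct (Rle_dec b (Rabs (X w))) as [Hl|Hl].
    - specialize (Ha2 Hl). unfold pc. eapply Rle_trans. apply Rmin_r. nra.
    - unfold pc, tp. rewrite Rmax_right by lra. rewrite Rmin_left by lra. nra.
    - apply Eh_scal_le; auto. rewrite Ev; simpl; lra. }
  rewrite E1 in H. simpl in H. lra.
Qed.

Lemma tp_decomp c t : 0 < c -> tp c t <= pc c t + tp (2*c) t.
Proof. intros Hc. unfold pc, tp, Rmin, Rmax. repeat destruct Rle_dec; lra. Qed.

Fixpoint G (q : R) (K : nat) : R := match K with O => 0 | S k => G q k + q^k end.
Lemma G_nonneg q K : 0 <= q -> 0 <= G q K.
Proof. intros Hq. induction K; simpl. lra. assert (0 <= q^K) by (apply pow_le; lra). lra. Qed.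
Lemma G_bound q K : 0 <= q < 1 -> G q K <= 1/(1-q).
Proof.
  intros Hq. assert (H : G q K * (1 - q) = 1 - q^K).
  { induction K; simpl. ring. rewrite Rmult_plus_distr_r, IHK. ring. }
  assert (0 <= q^K) by (apply pow_le; lra).
  apply Rmult_le_reg_r with (1-q). lra. rewrite H. field_simplify; lra.
Qed.

Lemma lemmaT {Omega} (S : SLE Omega) X : Hs S X ->
  (forall eps, 0 < eps -> exists M, forall x, M <= x ->
      Rbar_le (Vcap S (fun w => x <= Rabs (X w))) (Finite (eps * (lfun S X x / x ^ 2)))) ->
  (forall eps, 0 < eps -> exists M, forall c, M <= c ->
      Rbar_le (Eh S (fun w => Rmax (Rabs (X w) - c) 0)) (Finite eps)) ->
  forall x1, 0 < x1 -> 0 < lfun S X x1 ->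
  forall eps, 0 < eps -> exists A0, 0 < A0 /\ forall a, A0 <= a ->
    Ep S X a <= eps * (lfun S X a / a).
Proof.
  intros HX HI H3 x1 Hx1 Hl1 eps Heps.
  set (e1 := Rmin (eps/8) (1/6)).
  assert (He1 : 0 < e1 <= eps/8 /\ e1 <= 1/6).
  { unfold e1. split; [split|]. apply Rmin_glb_lt; lra. apply Rmin_l. apply Rmin_r. }
  destruct (HI e1 ltac:(lra)) as [M HM].
  exists (Rmax M (Rmax x1 1)). split. { eapply Rlt_le_trans; [|apply Rmax_r]. eapply Rlt_le_trans; [|apply Rmax_r]. lra. }
  intros a Ha.
  assert (HaM : M <= a) by (eapply Rle_trans; [apply Rmax_l|exact Ha]).
  assert (Ha1 : x1 <= a /\ 1 <= a).
  { assert (H1 := Rmax_r M (Rmax x1 1)). assert (H2 := Rmax_l x1 1). assert (H4 := Rmax_r x1 1). lra. }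
  assert (Hla : 0 < lfun S X a) by (eapply Rlt_le_trans; [exact Hl1|apply l_mono; auto; lra]).
  set (q := (1 + 3*e1)/2).
  set (L := lfun S X a / a).
  assert (HL : 0 < L) by (unfold L; apply Rdiv_lt_0_compat; lra).
  assert (Hind : forall K, lfun S X (2^K * a) <= (1+3*e1)^K * lfun S X a /\
                 Ep S X a <= e1 * L * G q K + Ep S X (2^K * a)).
  { induction K as [|K [IH1 IH2]].
    - simpl. rewrite Rmult_1_l. lra.
    - set (b := 2^K * a).
      assert (Hb1 : 1 <= 2^K) by (apply pow_R1_Rle; lra).
      assert (Hb : a <= b) by (unfold b; nra).
      assert (HbM : M <= b) by lra.
      assert (Hb0 : 0 < b) by lra.
      specialize (HM b HbM).
      assert (Hlb : lfun S X (2*b) <= lfun S X b + 3*b^2 * (e1 * (lfun S X b / b^2))).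
      { apply l_double; auto. }
      replace (3 * b ^ 2 * (e1 * (lfun S X b / b ^ 2))) with (3 * e1 * lfun S X b) in Hlb by (field; lra).
      replace (2^(Datatypes.S K) * a) with (2*b) by (unfold b; simpl; ring).
      assert (Hlb0 : 0 <= lfun S X b) by (apply l_fin; auto).
      split.
      + simpl. fold b in IH1. assert (Hp3 : 0 <= 1 + 3*e1) by lra. assert (Hm := Rmult_le_compat_l _ _ _ Hp3 IH1). nra.
      + destruct (pc_bound S X b _ HX Hb0 HM) as [Epc Hpc].
        destruct (Ep_fin S X HX H3 b) as [E1 _]. destruct (Ep_fin S X HX H3 (2*b)) as [E2 _].
        assert (Hd : Ep S X b <= real (Eh S (fun w => pc b (X w))) + Ep S X (2*b)).
        { assert (H := Eh_mono S _ _ (Hs_tp S X b HX) (Hs_plus S _ _ (Hs_pc S X b HX) (Hs_tp S X (2*b) HX))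
             (fun w => tp_decomp b (X w) Hb0)).
          assert (H' := Eh_add_le S _ _ (real (Eh S (fun w => pc b (X w)))) (Ep S X (2*b)) (Hs_pc S X b HX) (Hs_tp S X (2*b) HX)).
          rewrite Epc, E2 in H'. specialize (H' (Rle_refl _) (Rle_refl _)).
          assert (H'' := Rbar_le_trans _ _ _ H H'). rewrite E1 in H''. exact H''. }
        assert (Hq : lfun S X b / b <= q^K * L).
        { assert (Hqk : q^K * 2^K = (1+3*e1)^K) by (rewrite <- Rpow_mult_distr; unfold q; f_equal; field).
          fold b in IH1.
          unfold L. apply Rmult_le_reg_r with b; auto.
          replace (lfun S X b / b * b) with (lfun S X b) by (field; lra).
          replace (q^K * (lfun S X a / a) * b) with ((1+3*e1)^K * lfun S X a) by (unfold b; rewrite <- Hqk; field; lra).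
          exact IH1. }
        assert (Hpc2 : real (Eh S (fun w => pc b (X w))) <= e1 * (lfun S X b / b)).
        { eapply Rle_trans. apply Hpc. apply Req_le. field. lra. }
        simpl G. fold b in IH2. nra. }
  set (eps' := eps * L / 2).
  destruct (H3 eps' ltac:(unfold eps'; nra)) as [M' HM'].
  destruct (pow2_unbounded (M' / a)) as [K HK].
  destruct (Hind K) as [_ HK2].
  assert (HE : Ep S X (2^K * a) <= eps').
  { destruct (Ep_fin S X HX H3 (2^K*a)) as [E _]. specialize (HM' (2^K * a)).
    unfold tp in E. rewrite E in HM'. apply HM'.
    apply Rmult_le_compat_r with (r:=a) in HK; [|lra].
    replace (M' / a * a) with M' in HK by (field; lra). exact HK. }
  assert (HG : G q K <= 4). { eapply Rle_trans. apply G_bound. unfold q; lra. unfold q. apply Rmult_le_reg_r with (1 - (1 + 3 * e1) / 2). lra. field_simplify; lra. }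
  unfold eps' in HE. fold L.
  assert (HG0 : 0 <= G q K) by (apply G_nonneg; unfold q; lra).
  assert (Ha' : e1 * L * G q K <= e1 * L * 4) by (apply Rmult_le_compat_l; nra).
  assert (Hb' : e1 * L * 4 <= eps / 2 * L) by nra.
  lra.
Qed.

Definition gq (lam c t : R) := lam * t - c * lam^2 * t^2.
Definition Gs (lam c : R) (n : nat) (v : nat -> R) := psum (fun i => gq lam c (v i)) n.
Definition Phi (lam c : R) (n : nat) (v : nat -> R) := exp (Gs lam c n v).

Lemma gq_bound lam c t : 0 < c -> gq lam c t <= 1/(4*c).
Proof. intros Hc. unfold gq. set (u := lam*t).
  replace (c * lam^2 * t^2) with (c*u^2) by (unfold u; ring).
  apply Rmult_le_reg_r with (4*c). lra. field_simplify; try lra.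
  assert (0 <= (2*c*u - 1)^2) by apply pow2_ge_0. nra. Qed.

Lemma gq_lip lam c s t : 0 <= lam -> 0 <= c ->
  Rabs (gq lam c s - gq lam c t) <= (lam + c*lam^2*(Rabs s + Rabs t)) * Rabs (s - t).
Proof.
  intros Hl Hc. unfold gq.
  replace (lam * s - c * lam ^ 2 * s ^ 2 - (lam * t - c * lam ^ 2 * t ^ 2))
    with ((lam - c*lam^2*(s+t)) * (s - t)) by ring.
  rewrite Rabs_mult. apply Rmult_le_compat_r. apply Rabs_pos.
  eapply Rle_trans. apply Rabs_triang. rewrite Rabs_Ropp, Rabs_right by lra.
  rewrite !Rabs_mult. rewrite (Rabs_right c), (Rabs_right (lam^2)) by (try apply Rle_ge; try apply pow2_ge_0; lra).
  assert (Rabs (s+t) <= Rabs s + Rabs t) by apply Rabs_triang.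
  assert (0 <= c*lam^2) by (apply Rmult_le_pos; [lra|apply pow2_ge_0]). nra.
Qed.

Lemma exp_lip0 a b B : a <= b -> b <= B -> exp b - exp a <= exp B * (b - a).
Proof.
  intros Hab HbB.
  assert (E : exp a = exp (a - b) * exp b) by (rewrite <- exp_plus; f_equal; ring).
  assert (H1 := exp_ineq1_le (a - b)).
  assert (exp b <= exp B) by (destruct (Req_dec b B); [subst; lra| left; apply exp_increasing; lra]).
  assert (0 < exp b) by apply exp_pos.
  rewrite E. nra.
Qed.

Lemma exp_lip a b B : a <= B -> b <= B -> Rabs (exp a - exp b) <= exp B * Rabs (a - b).
Proof.
  intros Ha Hb. destruct (Rle_dec a b).
  - assert (exp a <= exp b) by (destruct (Req_dec a b); [subst; lra| left; apply exp_increasing; lra]).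
    rewrite Rabs_left1, Rabs_left1 by lra. assert (H2 := exp_lip0 a b B r Hb). lra.
  - assert (exp b <= exp a) by (left; apply exp_increasing; lra).
    rewrite Rabs_right, Rabs_right by lra. apply exp_lip0; lra.
Qed.

Lemma psum_ext f h n : (forall i, (i < n)%nat -> f i = h i) -> psum f n = psum h n.
Proof. induction n; intros H; simpl. auto. rewrite IHn, H; auto. Qed.

Lemma Gs_dep lam c n : depends_on n (Gs lam c n).
Proof. intros x y H. unfold Gs. apply psum_ext. intros i Hi. rewrite H; auto. Qed.

Lemma Gs_bound lam c n v : 0 < c -> Gs lam c n v <= INR n * (1/(4*c)).
Proof. intros Hc. unfold Gs. induction n; cbn [psum]. simpl; lra. rewrite S_INR.
  assert (H := gq_bound lam c (v n) Hc). lra. Qed.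

Lemma Gs_lip lam c n x y : 0 <= lam -> 0 <= c ->
  Rabs (Gs lam c n x - Gs lam c n y) <=
  INR n * ((lam + c*lam^2*(nmax n x + nmax n y)) * nmax n (vsub x y)).
Proof.
  intros Hl Hc.
  assert (K : forall k, (k <= n)%nat -> Rabs (psum (fun i => gq lam c (x i)) k - psum (fun i => gq lam c (y i)) k) <=
     INR k * ((lam + c*lam^2*(nmax n x + nmax n y)) * nmax n (vsub x y))).
  { induction k; intros Hk; cbn [psum]. rewrite Rminus_diag, Rabs_R0. simpl; lra.
    rewrite S_INR.
    replace (psum (fun i : nat => gq lam c (x i)) k + gq lam c (x k) -
      (psum (fun i : nat => gq lam c (y i)) k + gq lam c (y k))) with
      ((psum (fun i : nat => gq lam c (x i)) k - psum (fun i : nat => gq lam c (y i)) k) +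
       (gq lam c (x k) - gq lam c (y k))) by ring.
    eapply Rle_trans. apply Rabs_triang.
    assert (H1 := IHk ltac:(lia)).
    assert (H2 := gq_lip lam c (x k) (y k) Hl Hc).
    assert (Hx := nmax_ge n x k ltac:(lia)). assert (Hy := nmax_ge n y k ltac:(lia)).
    assert (Hd := nmax_ge n (vsub x y) k ltac:(lia)). unfold vsub in Hd.
    assert (0 <= c*lam^2) by (apply Rmult_le_pos; [lra|apply pow2_ge_0]).
    assert (lam + c * lam ^ 2 * (Rabs (x k) + Rabs (y k)) <= lam + c * lam ^ 2 * (nmax n x + nmax n y)) by nra.
    assert (0 <= lam + c * lam ^ 2 * (Rabs (x k) + Rabs (y k))) by (assert (0 <= Rabs (x k)) by apply Rabs_pos; assert (0 <= Rabs (y k)) by apply Rabs_pos; nra).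
    assert (0 <= Rabs (x k - y k)) by apply Rabs_pos.
    assert ((lam + c * lam ^ 2 * (Rabs (x k) + Rabs (y k))) * Rabs (x k - y k) <=
            (lam + c * lam ^ 2 * (nmax n x + nmax n y)) * nmax n (vsub x y)).
    { apply Rmult_le_compat; auto. }
    lra. }
  apply K. lia.
Qed.

Lemma Clip_Phi lam c n : 0 <= lam -> 0 < c -> Clip n (Phi lam c n).
Proof.
  intros Hl Hc. split.
  - intros x y H. unfold Phi. rewrite (Gs_dep lam c n x y H). auto.
  - set (B := INR n * (1/(4*c))).
    exists (exp B * INR n * (lam + c*lam^2) + 1), 1%nat. split.
    { assert (0 <= INR n) by apply pos_INR. assert (0 < exp B) by apply exp_pos.
      assert (0 <= c*lam^2) by (apply Rmult_le_pos; [lra|apply pow2_ge_0]).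
      assert (0 <= exp B * INR n) by nra. nra. }
    intros x y. unfold Phi.
    eapply Rle_trans. apply exp_lip; apply Gs_bound; auto.
    assert (H := Gs_lip lam c n x y Hl ltac:(lra)).
    rewrite !pow_1.
    assert (0 <= INR n) by apply pos_INR. assert (0 < exp B) by apply exp_pos.
    assert (0 <= c*lam^2) by (apply Rmult_le_pos; [lra|apply pow2_ge_0]).
    assert (Hnx := nmax_ge0 n x). assert (Hny := nmax_ge0 n y). assert (Hnd := nmax_ge0 n (vsub x y)).
    apply Rle_trans with (exp B * (INR n * ((lam + c * lam ^ 2 * (nmax n x + nmax n y)) * nmax n (vsub x y)))).
    { apply Rmult_le_compat_l; lra. }
    set (P := nmax n x + nmax n y). set (d := nmax n (vsub x y)).
    assert (HP : 0 <= P) by (unfold P; lra).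
    assert (lam + c * lam^2 * P <= (lam + c*lam^2) * (1 + P)) by nra.
    assert (0 <= exp B * INR n) by nra.
    assert (Hm : exp B * (INR n * ((lam + c * lam ^ 2 * P) * d)) <= (exp B * INR n) * ((lam + c*lam^2) * (1+P)) * d).
    { replace (exp B * (INR n * ((lam + c * lam ^ 2 * P) * d))) with ((exp B * INR n) * (lam + c * lam ^ 2 * P) * d) by ring.
      apply Rmult_le_compat_r; auto. apply Rmult_le_compat_l; auto. }
    replace (1 + nmax n x + nmax n y) with (1 + P) by (unfold P; ring).
    assert (0 <= (1+P) * d) by (apply Rmult_le_pos; unfold d; lra).
    replace ((exp B * INR n * (lam + c * lam ^ 2) + 1) * (1 + P) * d) with
      ((exp B * INR n) * ((lam + c*lam^2) * (1+P)) * d + (1+P)*d) by ring. lra.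
Qed.

Lemma Clip1_f lam c : 0 <= lam -> 0 < c -> Clip1 (fun t => exp (gq lam c t)).
Proof.
  intros Hl Hc. set (B := 1/(4*c)).
  exists (exp B * (lam + c*lam^2) + 1), 1%nat. split.
  { assert (0 < exp B) by apply exp_pos.
    assert (0 <= c*lam^2) by (apply Rmult_le_pos; [lra|apply pow2_ge_0]). nra. }
  intros x y. eapply Rle_trans. apply exp_lip; apply gq_bound; auto.
  assert (H := gq_lip lam c x y Hl ltac:(lra)). rewrite !pow_1.
  assert (0 < exp B) by apply exp_pos.
  assert (0 <= c*lam^2) by (apply Rmult_le_pos; [lra|apply pow2_ge_0]).
  assert (0 <= Rabs x) by apply Rabs_pos. assert (0 <= Rabs y) by apply Rabs_pos. assert (0 <= Rabs (x-y)) by apply Rabs_pos.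
  set (P := Rabs x + Rabs y).
  assert (lam + c * lam^2 * P <= (lam + c*lam^2) * (1 + P)) by (unfold P; nra).
  apply Rle_trans with (exp B * ((lam + c * lam ^ 2 * P) * Rabs (x - y))).
  { apply Rmult_le_compat_l; [left; apply exp_pos| exact H]. }
  replace (1 + Rabs x + Rabs y) with (1 + P) by (unfold P; ring).
  assert (0 <= (1+P) * Rabs (x-y)) by (unfold P; nra).
  assert (exp B * ((lam + c * lam ^ 2 * P) * Rabs (x - y)) <= exp B * ((lam + c*lam^2) * (1 + P)) * Rabs (x-y)).
  { rewrite <- Rmult_assoc. apply Rmult_le_compat_r; auto. apply Rmult_le_compat_l; lra. }
  replace ((exp B * (lam + c * lam ^ 2) + 1) * (1 + P) * Rabs (x - y)) with (exp B * ((lam + c*lam^2) * (1 + P)) * Rabs (x-y) + (1+P)*Rabs (x-y)) by ring. lra.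
Qed.

Lemma Phi_upd lam c n x v : Phi lam c (Datatypes.S n) (upd x n v) = exp (Gs lam c n x) * exp (gq lam c v).
Proof.
  unfold Phi, Gs. cbn [psum]. rewrite <- exp_plus. f_equal. f_equal.
  - apply psum_ext. intros i Hi. unfold upd. destruct (Nat.eqb_spec i n). lia. auto.
  - unfold upd. rewrite Nat.eqb_refl. auto.
Qed.

Lemma Rbar_mult_fin a b : Rbar_mult (Finite a) (Finite b) = Finite (a*b).
Proof. reflexivity. Qed.

Lemma prod_indep {Omega} (S : SLE Omega) X Xs lam c : Hs S X -> (forall n, Hs S (Xs n)) ->
  indep_seq S Xs -> (forall n, ident_distr S (Xs n) X) -> 0 <= lam -> 0 < c ->
  forall n, Eh S (fun w => Phi lam c n (fun j => Xs j w)) =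
            Finite ((real (Eh S (fun w => exp (gq lam c (X w))))) ^ n) /\
            Hs S (fun w => Phi lam c n (fun j => Xs j w)).
Proof.
  intros HX HXs Hind Hid Hl Hc.
  set (m := real (Eh S (fun w => exp (gq lam c (X w))))).
  assert (HfX : Hs S (fun w => exp (gq lam c (X w)))) by (apply (Hs_clip1 S X (fun t => exp (gq lam c t))); auto; apply Clip1_f; auto).
  destruct (Eh_fin S (fun w => exp (gq lam c (X w))) 0 (exp (1/(4*c))) HfX) as [Em Hm].
  { intros w. split. left; apply exp_pos. destruct (Req_dec (gq lam c (X w)) (1/(4*c))) as [E|E]. rewrite E; lra.
    left. apply exp_increasing. assert (H := gq_bound lam c (X w) Hc). lra. }
  fold m in Em, Hm.
  assert (HPhi : forall n, Hs S (fun w => Phi lam c n (fun j => Xs j w))).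
  { intros n. apply (Hs_comp S n Xs (Phi lam c n)). intros; auto. right. apply Clip_Phi; auto. }
  intros n. split; [|apply HPhi].
  induction n.
  - assert (E : (fun w => Phi lam c 0 (fun j => Xs j w)) = (fun _ => 1)).
    { apply functional_extensionality. intros w. unfold Phi, Gs. simpl. apply exp_0. }
    rewrite E, Eh_const. reflexivity.
  - assert (Hh : forall x, Eh S (fun w => Phi lam c (Datatypes.S n) (upd x n (Xs n w))) = Finite (exp (Gs lam c n x) * m)).
    { intros x.
      assert (E : (fun w => Phi lam c (Datatypes.S n) (upd x n (Xs n w))) = (fun w => exp (Gs lam c n x) * exp (gq lam c (Xs n w)))).
      { apply functional_extensionality. intros w. apply Phi_upd. }
      rewrite E, Eh_poshom. 2:{ apply (Hs_clip1 S (Xs n) (fun t => exp (gq lam c t))); auto; apply Clip1_f; auto. }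
      2: apply exp_pos.
      rewrite (Hid n (fun t => exp (gq lam c t))). rewrite Em. reflexivity. apply Clip1_f; auto. }
    assert (H := Hind n (Phi lam c (Datatypes.S n)) (Clip_Phi lam c (Datatypes.S n) Hl Hc)).
    cbv zeta in H.
    assert (E2 : (fun w => real (Eh S (fun w0 => Phi lam c (Datatypes.S n) (upd (fun j => Xs j w) n (Xs n w0)))))
                 = (fun w => m * Phi lam c n (fun j => Xs j w))).
    { apply functional_extensionality. intros w. rewrite Hh. simpl. unfold Phi. ring. }
    cbv beta in H. rewrite E2 in H. rewrite H.
    + destruct Hm as [Hm0 _]. destruct (Req_dec m 0) as [Z|Z].
      * assert (E3 : (fun w => m * Phi lam c n (fun j => Xs j w)) = (fun _ => 0)).
        { apply functional_extensionality. intros; rewrite Z; ring. }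
        rewrite E3, Eh_const. rewrite Z. simpl. f_equal. ring.
      * rewrite Eh_poshom; auto. rewrite IHn. simpl. f_equal. lra.
    + intros x. rewrite Hh. reflexivity.
    + apply Hs_scal, HPhi.
Qed.

Lemma key_exp (eta u : R) : 0 < eta <= 1 -> -(eta/2) <= u ->
  exp (u - (1+eta)/2 * u^2) <= 1 + u.
Proof.
  intros He Hu.
  set (c := (1+eta)/2).
  set (psi := fun t => (1+t) * exp (-(t - c * t^2))).
  set (dpsi := fun t => exp (-(t - c*t^2)) * (t * (2*c*(1+t) - 1))).
  assert (Hd : forall t, derivable_pt_lim psi t (dpsi t)).
  { intros t. apply is_derive_Reals. unfold psi, dpsi.
    auto_derive; auto. replace (- (t + - (c * (t * (t * 1))))) with (- (t - c * t ^ 2)) by ring. ring. }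
  assert (H0 : psi 0 = 1). { unfold psi. replace (-(0 - c*0^2)) with 0 by ring. rewrite exp_0. ring. }
  assert (Hge : 1 <= psi u).
  { destruct (Rtotal_order u 0) as [Hlt|[Heq|Hgt]].
    - destruct (MVT_cor2 psi dpsi u 0 Hlt (fun c0 _ => Hd c0)) as [c0 [Hc1 Hc2]].
      assert (dpsi c0 <= 0).
      { unfold dpsi. assert (0 < exp (-(c0 - c*c0^2))) by apply exp_pos.
        assert (c0 * (2 * c * (1 + c0) - 1) <= 0).
        { unfold c. nra. }
        nra. }
      nra.
    - subst u. lra.
    - destruct (MVT_cor2 psi dpsi 0 u Hgt (fun c0 _ => Hd c0)) as [c0 [Hc1 Hc2]].
      assert (0 <= dpsi c0).
      { unfold dpsi. assert (0 < exp (-(c0 - c*c0^2))) by apply exp_pos.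
        assert (0 <= c0 * (2 * c * (1 + c0) - 1)).
        { unfold c. nra. }
        nra. }
      nra. }
  unfold psi in Hge.
  assert (Hm : exp (u - c*u^2) * exp (-(u - c*u^2)) = 1).
  { rewrite <- exp_plus. replace (u - c * u ^ 2 + - (u - c * u ^ 2)) with 0 by ring. apply exp_0. }
  assert (0 < exp (-(u - c*u^2))) by apply exp_pos.
  assert (0 < exp (u - c*u^2)) by apply exp_pos.
  nra.
Qed.

Lemma Ep_mono {Omega} (S : SLE Omega) X c1 c2 : Hs S X ->
  (forall eps, 0 < eps -> exists M, forall c, M <= c ->
      Rbar_le (Eh S (fun w => Rmax (Rabs (X w) - c) 0)) (Finite eps)) ->
  c1 <= c2 -> Ep S X c2 <= Ep S X c1.
Proof.
  intros HX H3 H. destruct (Ep_fin S X HX H3 c1) as [E1 _]. destruct (Ep_fin S X HX H3 c2) as [E2 _].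
  assert (Hm := Eh_mono S _ _ (Hs_tp S X c2 HX) (Hs_tp S X c1 HX)).
  rewrite E1, E2 in Hm. apply Hm. intros w. unfold tp, Rmax. repeat destruct Rle_dec; lra.
Qed.

Lemma one_term {Omega} (S : SLE Omega) X eta lam : Hs S X -> Eh S X = Finite 0 ->
  (forall eps, 0 < eps -> exists M, forall c, M <= c ->
      Rbar_le (Eh S (fun w => Rmax (Rabs (X w) - c) 0)) (Finite eps)) ->
  0 < eta <= 1 -> 0 < lam ->
  real (Eh S (fun w => exp (gq lam ((1+eta)/2) (X w)))) <= 1 + 2*lam * Ep S X ((eta/2)/(2*lam)).
Proof.
  intros HX HE H3 He Hl.
  set (c := (1+eta)/2). set (k := (eta/2)/(2*lam)).
  assert (Hf : Hs S (fun w => exp (gq lam c (X w)))).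
  { apply (Hs_clip1 S X (fun t => exp (gq lam c t))); auto; apply Clip1_f; unfold c; lra. }
  destruct (Eh_fin S (fun w => exp (gq lam c (X w))) 0 (exp (1/(4*c))) Hf) as [Em _].
  { intros w. split. left; apply exp_pos. destruct (Req_dec (gq lam c (X w)) (1/(4*c))) as [E|E]. rewrite E; lra.
    left. apply exp_increasing. assert (H := gq_bound lam c (X w) ltac:(unfold c; lra)). lra. }
  destruct (Ep_fin S X HX H3 k) as [Ek _].
  assert (Hpt : forall t, exp (gq lam c t) <= 1 + lam * t + 2*lam * tp k t).
  { intros t. assert (Htp : 0 <= tp k t) by (unfold tp; apply Rmax_r).
    assert (Hg : gq lam c t = lam*t - c * (lam*t)^2) by (unfold gq; ring).
    destruct (Rle_dec (-(eta/2)) (lam*t)) as [Hu|Hu].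
    - rewrite Hg. assert (H := key_exp eta (lam*t) He Hu). fold c in H. nra.
    - assert (gq lam c t < 0). { rewrite Hg. assert (0 <= c * (lam*t)^2) by (apply Rmult_le_pos; [unfold c; lra| apply pow2_ge_0]). lra. }
      assert (exp (gq lam c t) < 1) by (rewrite <- exp_0; apply exp_increasing; lra).
      assert (tp k t >= -t - k). { unfold tp. eapply Rge_trans. apply Rle_ge, Rmax_l. assert (-t <= Rabs t) by (rewrite <- Rabs_Ropp; apply Rle_abs). lra. }
      assert (2*lam*k = eta/2) by (unfold k; field; lra). nra. }
  assert (Hb : Rbar_le (Eh S (fun w => exp (gq lam c (X w)))) (Finite (1 + 0 + 2*lam*Ep S X k))).
  { apply (Eh_mono_le S _ (fun w => (1 + lam * X w) + 2*lam * tp k (X w))); auto.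
    apply Hs_plus. apply Hs_plus. apply Hs_const. apply Hs_scal; auto. apply Hs_scal, Hs_tp; auto.
    apply Eh_add_le. apply Hs_plus. apply Hs_const. apply Hs_scal; auto. apply Hs_scal, Hs_tp; auto.
    apply Eh_add_le. apply Hs_const. apply Hs_scal; auto. rewrite Eh_const. simpl; lra.
    rewrite Eh_poshom, HE; auto. simpl. rewrite Rmult_0_r. lra.
    apply Eh_scal_le. apply Hs_tp; auto. lra. rewrite Ek. simpl; lra. }
  rewrite Em in Hb. simpl in Hb. lra.
Qed.

Lemma exp_mono a b : a <= b -> exp a <= exp b.
Proof. intros H. destruct (Req_dec a b). subst; lra. left; apply exp_increasing; lra. Qed.

Lemma exp_pow_n u n : exp (INR n * u) = exp u ^ n.
Proof. induction n. simpl. rewrite Rmult_0_l; apply exp_0.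
  rewrite S_INR. simpl. rewrite <- IHn, <- exp_plus. f_equal. ring. Qed.

Lemma pow_exp_bound u n : 0 <= u -> (1+u)^n <= exp (INR n * u).
Proof. intros Hu. rewrite exp_pow_n. apply pow_incr. split. lra. apply exp_ineq1_le. Qed.

Lemma psum_lin lam c a n :
  psum (fun i => gq lam c (a i)) n = lam * psum a n - c*lam^2 * psum (fun i => a i ^2) n.
Proof. induction n; cbn [psum]. ring. rewrite IHn. unfold gq. ring. Qed.

Lemma psum_ge f K k : (forall i, 0 <= f i) -> (k < K)%nat -> f k <= psum f K.
Proof.
  intros Hf. induction K; intros Hk. lia. simpl.
  assert (0 <= psum f K) by (clear -Hf; induction K; simpl; [lra| specialize (Hf K); lra]).
  destruct (Nat.eq_dec k K). subst. lra. assert (H1 := IHK ltac:(lia)). specialize (Hf K). lra.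
Qed.

Lemma psum_nonneg f K : (forall i, 0 <= f i) -> 0 <= psum f K.
Proof. intros Hf. induction K; simpl. lra. specialize (Hf K). lra. Qed.

Lemma Hs_psum {Omega} (S : SLE Omega) (F : nat -> Omega -> R) K :
  (forall k, Hs S (F k)) -> Hs S (fun w => psum (fun k => F k w) K).
Proof. intros HF. induction K; simpl. apply Hs_const. apply Hs_plus; auto. Qed.

Lemma Eh_psum_le {Omega} (S : SLE Omega) (F : nat -> Omega -> R) K B :
  (forall k, Hs S (F k)) -> (forall k, (k < K)%nat -> Rbar_le (Eh S (F k)) (Finite B)) ->
  Rbar_le (Eh S (fun w => psum (fun k => F k w) K)) (Finite (INR K * B)).
Proof.
  intros HF HB. induction K; simpl.
  - rewrite Eh_const. simpl. lra.
  - replace (match K with | 0%nat => 1 | Datatypes.S _ => INR K + 1 end) with (INR K + 1) by (destruct K; simpl; lra).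
    replace ((INR K + 1) * B) with (INR K * B + B) by ring.
    apply Eh_add_le. apply Hs_psum; auto. auto. apply IHK. intros; apply HB; lia. apply HB; lia.
Qed.

Lemma cells (y0 r v : R) (K : nat) : 0 < y0 -> 1 < r -> (1 <= K)%nat ->
  y0 <= v <= y0 * r^K -> exists k, (k < K)%nat /\ y0 * r^k <= v <= r * (y0 * r^k).
Proof.
  intros Hy Hr HK Hv. induction K. lia.
  destruct (Nat.eq_dec K 0).
  - subst. exists 0%nat. split. lia. simpl in *. lra.
  - destruct (Rle_dec v (y0 * r^K)).
    + destruct IHK as [k [Hk1 Hk2]]. lia. lra. exists k. split; auto.
    + exists K. split. lia. split. lra. simpl in Hv. lra.
Qed.

Lemma l_abs {Omega} (S : SLE Omega) X x : lfun S X (Rabs x) = lfun S X x.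
Proof. unfold lfun. rewrite pow2_abs. reflexivity. Qed.

Lemma zfacts {Omega} (S : SLE Omega) X (HX : Hs S X)
  (H3 : forall eps, 0 < eps -> exists M, forall c, M <= c ->
      Rbar_le (Eh S (fun w => Rmax (Rabs (X w) - c) 0)) (Finite eps))
  (B0 q : R) : 0 <= B0 -> 0 < q ->
  let z := real (Glb_Rbar (fun s => B0 + 1 <= s /\ lfun S X s / s ^ 2 <= q)) in
  B0 + 1 <= z /\ lfun S X (2*z) / (2*z)^2 <= q /\
  (forall s, B0 + 1 <= s -> s < z -> q < lfun S X s / s^2).
Proof.
  intros HB0 Hq z.
  set (T := fun s => B0 + 1 <= s /\ lfun S X s / s ^ 2 <= q) in z.
  destruct (H3 1 ltac:(lra)) as [M HM]. set (Mc := Rmax M 1).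
  assert (HMc : 1 <= Mc /\ M <= Mc) by (split; [apply Rmax_r| apply Rmax_l]).
  destruct (Ep_fin S X HX H3 Mc) as [EM _].
  assert (HEM : Ep S X Mc <= 1). { specialize (HM Mc (proj2 HMc)). unfold tp in EM. rewrite EM in HM. exact HM. }
  assert (Hls : forall s, 0 < s -> lfun S X s <= s * (Mc + 1)).
  { intros s Hs. destruct (l_fin S X s HX) as [El _].
    assert (H := Eh_mono_le S (fun w => Rmin (X w ^ 2) (s ^ 2)) (fun w => s * Mc + s * tp Mc (X w)) (s*Mc + s*1)
       (Hs_sqmin S X s HX) (Hs_plus S _ _ (Hs_const S _) (Hs_scal S _ s (Hs_tp S X Mc HX)))).
    rewrite El in H. replace (s * (Mc + 1)) with (s * Mc + s * 1) by ring. apply H.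
    - intros w. assert (Rabs (X w) <= Mc + tp Mc (X w)) by (unfold tp; assert (H0 := Rmax_l (Rabs (X w) - Mc) 0); lra).
      assert (Rmin (X w ^ 2) (s ^ 2) <= s * Rabs (X w)).
      { unfold Rmin. destruct (Rle_dec (X w ^2) (s^2)).
        - rewrite <- (pow2_abs (X w)) in *. assert (0 <= Rabs (X w)) by apply Rabs_pos. nra.
        - rewrite <- (pow2_abs (X w)) in *. assert (0 <= Rabs (X w)) by apply Rabs_pos. nra. }
      nra.
    - apply Eh_add_le. apply Hs_const. apply Hs_scal, Hs_tp; auto. rewrite Eh_const; simpl; lra.
      apply Eh_scal_le; auto. apply Hs_tp; auto. unfold tp in *. rewrite EM. simpl. lra. }
  set (sst := Rmax (B0+1) ((Mc+1)/q)).
  assert (Hsst : T sst).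
  { split. apply Rmax_l. assert (Hs1 : (Mc+1)/q <= sst) by apply Rmax_r. assert (Hs2 : B0+1 <= sst) by apply Rmax_l.
    assert (Hsp : 0 < sst) by lra. assert (H := Hls sst Hsp).
    apply Rmult_le_reg_r with (sst^2). nra. unfold Rdiv. rewrite Rmult_assoc, Rinv_l, Rmult_1_r by nra.
    apply Rle_trans with (sst * (Mc + 1)); auto.
    assert (Mc + 1 <= q * sst). { apply Rmult_le_reg_r with (/q). apply Rinv_0_lt_compat; lra.
      replace (q * sst * / q) with sst by (field; lra). exact Hs1. }
    assert (0 < sst) by lra. nra. }
  destruct (Glb_Rbar_correct T) as [Hlb Hgr].
  assert (Hlo : Rbar_le (Finite (B0+1)) (Glb_Rbar T)).
  { apply Hgr. intros s Hs. apply Hs. }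
  assert (Hup : Rbar_le (Glb_Rbar T) (Finite sst)) by (apply Hlb; auto).
  assert (Ez : Glb_Rbar T = Finite z).
  { unfold z. destruct (Glb_Rbar T); simpl in *; try contradiction; auto. }
  rewrite Ez in Hlo, Hlb, Hgr. simpl in Hlo.
  assert (Hlow : forall s, T s -> z <= s) by (intros s Hs; apply (Hlb s Hs)).
  split; auto. split.
  - destruct (Classical_Prop.classic (exists t, T t /\ t < 2*z)) as [[t [Ht1 Ht2]]|Hn].
    + destruct Ht1 as [Ht1 Ht3].
      assert (Hsc := l_scale S X t (2*z) HX ltac:(lra)).
      apply Rle_trans with (lfun S X t / t^2); auto.
      apply Rmult_le_reg_r with ((2*z)^2 * t^2). apply Rmult_lt_0_compat; apply pow_lt; lra.
      unfold Rdiv. replace (lfun S X (2 * z) * / (2 * z) ^ 2 * ((2 * z) ^ 2 * t ^ 2)) with (t^2 * lfun S X (2*z)) by (field; lra).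
      replace (lfun S X t * / t ^ 2 * ((2 * z) ^ 2 * t ^ 2)) with ((2*z)^2 * lfun S X t) by (field; lra). lra.
    + exfalso. assert (Rbar_le (Finite (2*z)) (Finite z)).
      { apply Hgr. intros s Hs. simpl. destruct (Rle_dec (2*z) s); auto. exfalso; apply Hn. exists s; split; auto; lra. }
      simpl in H. lra.
  - intros s Hs1 Hs2. destruct (Rlt_dec q (lfun S X s / s^2)); auto. exfalso.
    assert (z <= s) by (apply Hlow; split; auto; lra). lra.
Qed.

Lemma bernoulli x n : 0 <= x -> 1 + INR n * x <= (1+x)^n.
Proof. intros Hx. induction n. simpl; lra. rewrite S_INR. simpl.
  assert (0 <= INR n) by apply pos_INR. nra. Qed.

Lemma b0facts {Omega} (S : SLE Omega) X : Hs S X -> forall x1, 0 < x1 -> 0 < lfun S X x1 ->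
  0 <= b0 S X /\ 0 < lfun S X (b0 S X + 1).
Proof.
  intros HX x1 Hx1 Hl1. unfold b0.
  set (E := fun x => 0 <= x /\ 0 < lfun S X x).
  destruct (Glb_Rbar_correct E) as [Hlb Hgr].
  assert (Hlo : Rbar_le (Finite 0) (Glb_Rbar E)) by (apply Hgr; intros s Hs; apply Hs).
  assert (Hup : Rbar_le (Glb_Rbar E) (Finite x1)) by (apply Hlb; split; lra).
  destruct (Glb_Rbar E) as [g| |] eqn:Eg; simpl in *; try contradiction.
  split; auto.
  destruct (Classical_Prop.classic (exists t, E t /\ t < g + 1)) as [[t [[Ht0 Ht1] Ht2]]|Hn].
  - eapply Rlt_le_trans. exact Ht1. apply l_mono; auto. lra.
  - exfalso. assert (Rbar_le (Finite (g+1)) (Finite g)).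
    { apply Hgr. intros s Hs. simpl. destruct (Rle_dec (g+1) s); auto. exfalso; apply Hn. exists s; split; auto; lra. }
    simpl in H. lra.
Qed.

Lemma cell_bound {Omega} (S : SLE Omega) X Xs (HX : Hs S X) (HXs : forall n, Hs S (Xs n))
  (Hind : indep_seq S Xs) (Hid : forall n, ident_distr S (Xs n) X) (HE0 : Eh S X = Finite 0)
  (H3 : forall eps, 0 < eps -> exists M, forall c, M <= c ->
      Rbar_le (Eh S (fun w => Rmax (Rabs (X w) - c) 0)) (Finite eps))
  eta lam n C0 U : 0 < eta <= 1 -> 0 < lam ->
  INR n * (2*lam*Ep S X ((eta/2)/(2*lam))) <= U ->
  Hs S (fun w => exp C0 * Phi lam ((1+eta)/2) n (fun j => Xs j w)) /\
  Rbar_le (Eh S (fun w => exp C0 * Phi lam ((1+eta)/2) n (fun j => Xs j w))) (Finite (exp (C0 + U))).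
Proof.
  intros He Hl HU.
  destruct (prod_indep S X Xs lam ((1+eta)/2) HX HXs Hind Hid ltac:(lra) ltac:(lra) n) as [EP HP].
  split. apply Hs_scal; auto.
  rewrite Eh_poshom; auto. 2: apply exp_pos. rewrite EP. simpl.
  set (m := real (Eh S (fun w => exp (gq lam ((1 + eta) / 2) (X w))))) in *.
  assert (Hm := one_term S X eta lam HX HE0 H3 He Hl). fold m in Hm.
  assert (Hm0 : 0 <= m).
  { unfold m. destruct (Eh_fin S (fun w => exp (gq lam ((1 + eta) / 2) (X w))) 0 (exp (1/(4*((1+eta)/2))))) as [_ Hb].
    apply (Hs_clip1 S X (fun t => exp (gq lam ((1+eta)/2) t))); auto; apply Clip1_f; lra.
    intros w. split. left; apply exp_pos. apply exp_mono. apply gq_bound. lra. lra. }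
  destruct (Ep_fin S X HX H3 ((eta/2)/(2*lam))) as [_ HEp0].
  set (u := 2*lam*Ep S X ((eta/2)/(2*lam))) in *.
  assert (Hu : 0 <= u) by (unfold u; nra).
  assert (H1 : m^n <= (1+u)^n) by (apply pow_incr; lra).
  assert (H2 := pow_exp_bound u n Hu).
  assert (H4 : exp (INR n * u) <= exp U) by (apply exp_mono; lra).
  rewrite exp_plus. assert (0 < exp C0) by apply exp_pos.
  apply Rmult_le_compat_l; lra.
Qed.

Lemma cell_event x y V Sm eta : 0 < x -> 0 < y -> 0 < eta ->
  y <= V <= (1+eta)*y -> x * sqrt V <= Sm ->
  1 <= exp (-x^2 + (1+eta)^2/2 * x^2) * exp ((x / sqrt y) * Sm - (1+eta)/2 * (x / sqrt y)^2 * V).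
Proof.
  intros Hx Hy He [HV1 HV2] HS.
  rewrite <- exp_plus. apply Rle_trans with (exp 0); [rewrite exp_0; lra| apply exp_mono].
  set (lam := x / sqrt y).
  assert (Hsy : 0 < sqrt y) by (apply sqrt_lt_R0; lra).
  assert (Hl : 0 < lam) by (unfold lam; apply Rdiv_lt_0_compat; lra).
  assert (E1 : lam * sqrt y = x) by (unfold lam; field; lra).
  assert (Hss : sqrt y * sqrt y = y) by (apply sqrt_sqrt; lra).
  assert (E2 : lam^2 * y = x^2). { rewrite <- E1. transitivity (lam^2 * (sqrt y * sqrt y)). rewrite Hss; ring. ring. }
  assert (Hsv : sqrt y <= sqrt V) by (apply sqrt_le_1; lra).
  assert (A : x^2 <= lam * Sm).
  { assert (x * sqrt y <= Sm) by nra. replace (x^2) with (lam * (x * sqrt y)) by (transitivity (x * (lam * sqrt y)); [ring| rewrite E1; ring]). nra. }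
  assert (B : (1+eta)/2 * lam^2 * V <= (1+eta)^2/2 * x^2).
  { rewrite <- E2. assert (Hp : 0 <= (1+eta)/2*lam^2) by (assert (0 <= lam^2) by apply pow2_ge_0; nra).
    assert (H := Rmult_le_compat_l _ _ _ Hp HV2). replace ((1 + eta) ^ 2 / 2 * (lam ^ 2 * y)) with ((1+eta)/2*lam^2 * ((1+eta)*y)) by field. exact H. }
  lra.
Qed.

Theorem proposition4p2 (Omega : Type) (S : SLE Omega)
  (X : Omega -> R) (Xs : nat -> Omega -> R) (xs : nat -> R)
  (HX : Hs S X) (HXs : forall n, Hs S (Xs n))
  (Hind : indep_seq S Xs)
  (Hid : forall n, ident_distr S (Xs n) X)
  (Hmean : Eh S X = Finite 0 /\ Ecal S X = Finite 0)
  (Hnondeg : exists x, 0 < lfun S X x)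
  (HI : forall eps, 0 < eps -> exists M, forall x, M <= x ->
      Rbar_le (Vcap S (fun w => x <= Rabs (X w))) (Finite (eps * (lfun S X x / x ^ 2))))
  (HII : exists C M, forall x, M <= x -> lfun S X x <= C * lcal S X x)
  (HIII : forall eps, 0 < eps -> exists M, forall c, M <= c ->
      Rbar_le (Eh S (fun w => Rmax (Rabs (X w) - c) 0)) (Finite eps))
  (HIVa : forall M, exists N, forall n, (N <= n)%nat -> M <= xs n)
  (HIVb : forall eps, 0 < eps -> exists N, forall n, (N <= n)%nat ->
      Rabs (xs n) <= eps * sqrt (INR n)) :
  forall delta, 0 < delta < 1 ->
  forall eps, 0 < eps -> exists N, forall n, (N <= n)%nat ->
    Rbar_le
      (Vcap S (fun w =>
         xs n * sqrt (V2sum Xs n w) <= Ssum Xs n w /\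
         delta * INR n * lfun S X (zseq S X xs n) <= V2sum Xs n w /\
         V2sum Xs n w <= 9 * INR n * lfun S X (zseq S X xs n)))
      (Finite (exp (- xs n ^ 2 / 2 + eps * xs n ^ 2))).
Proof.
  intros delta Hdel eps Heps.
  destruct Hmean as [HE0 _].
  destruct Hnondeg as [x0 Hx0].
  assert (Hx1 : 0 < Rabs x0 /\ 0 < lfun S X (Rabs x0)).
  { rewrite l_abs. split; auto. destruct (Req_dec x0 0) as [Z|Z].
    - subst. destruct (l_fin S X 0 HX) as [_ Hb]. simpl in Hb. lra.
    - apply Rabs_pos_lt; auto. }
  destruct Hx1 as [Hx1a Hx1b].
  destruct (b0facts S X HX (Rabs x0) Hx1a Hx1b) as [Hb0 Hl1].
  set (B0 := b0 S X) in *. set (l1 := lfun S X (B0 + 1)) in *.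
  set (eta := Rmin (eps/4) 1).
  assert (Heta : 0 < eta <= 1 /\ eta <= eps/4).
  { unfold eta. split; [split|]. apply Rmin_glb_lt; lra. apply Rmin_r. apply Rmin_l. }
  destruct (INR_unbounded (9/(delta*eta))) as [K0 HK0].
  set (K := Datatypes.S K0).
  assert (HK : delta * (1+eta)^K >= 9).
  { assert (H := bernoulli eta K ltac:(lra)).
    assert (INR K >= 9/(delta*eta)) by (unfold K; rewrite S_INR; lra).
    assert (INR K * (delta * eta) >= 9).
    { apply Rmult_ge_compat_r with (r := delta*eta) in H0; [|nra]. unfold Rdiv in H0. rewrite Rmult_assoc, Rinv_l in H0 by nra. lra. }
    nra. }
  set (sd := sqrt delta).
  assert (Hsd : 0 < sd < 1 /\ sd * sd = delta).
  { unfold sd. split. split. apply sqrt_lt_R0; lra. rewrite <- sqrt_1. apply sqrt_lt_1; lra. apply sqrt_sqrt; lra. }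
  set (rho := (eta/2) * sd / 4).
  assert (Hrho : 0 < rho <= 1) by (unfold rho; split; nra).
  set (epsT := eta * sd * rho / 16).
  assert (HepsT : 0 < epsT) by (unfold epsT; destruct Heta as [[? ?] ?]; destruct Hsd as [[? ?] ?]; apply Rdiv_lt_0_compat; [repeat apply Rmult_lt_0_compat|]; lra).
  destruct (lemmaT S X HX HI HIII (Rabs x0) Hx1a Hx1b epsT HepsT) as [A0 [HA0 HT]].
  set (Z := Rmax (2*(B0+1)) (A0/rho)).
  assert (HZ : 2*(B0+1) <= Z /\ A0/rho <= Z) by (split; [apply Rmax_l|apply Rmax_r]).
  set (e2 := sqrt (l1/(8*Z^2))).
  assert (HZp : 0 < Z) by lra.
  assert (He2 : 0 < e2 /\ e2 * e2 = l1/(8*Z^2)).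
  { unfold e2. split. apply sqrt_lt_R0. apply Rdiv_lt_0_compat; nra. apply sqrt_sqrt. left. apply Rdiv_lt_0_compat; nra. }
  destruct (HIVb e2 (proj1 He2)) as [N1 HN1].
  destruct (HIVa (sqrt (4*INR K/eps) + 1)) as [N2 HN2].
  exists (Nat.max (Nat.max N1 N2) 1).
  intros n Hn.
  specialize (HN1 n ltac:(lia)). specialize (HN2 n ltac:(lia)).
  set (x := xs n) in *.
  assert (HnR : 1 <= INR n) by (apply (le_INR 1); lia).
  assert (Hsq4 : 0 <= sqrt (4*INR K/eps)) by apply sqrt_pos.
  assert (Hx : 0 < x) by lra.
  assert (HxK : 4*INR K/eps <= x^2).
  { rewrite <- (sqrt_sqrt (4*INR K/eps)). 2:{ assert (0 <= INR K) by apply pos_INR. unfold Rdiv. apply Rmult_le_pos. lra. left; apply Rinv_0_lt_compat; lra. }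
    nra. }
  assert (Hxn : x^2 <= e2*e2 * INR n).
  { rewrite Rabs_right in HN1 by lra. assert (0 <= sqrt (INR n)) by apply sqrt_pos.
    assert (sqrt (INR n) * sqrt (INR n) = INR n) by (apply sqrt_sqrt; lra).
    assert (0 <= e2) by lra. simpl. nra. }
  set (q := x^2 / INR n).
  assert (Hq : 0 < q) by (unfold q; apply Rdiv_lt_0_compat; nra).
  destruct (zfacts S X HX HIII B0 q Hb0 Hq) as [Hz1 [Hz2 Hz3]].
  change (real (Glb_Rbar (fun s => B0 + 1 <= s /\ lfun S X s / s ^ 2 <= q))) with (zseq S X xs n) in Hz1, Hz2, Hz3.
  set (z := zseq S X xs n) in *.
  set (L := lfun S X z).
  assert (Hz0 : 0 < z) by lra.
  assert (HzZ : Z <= z).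
  { destruct (Rle_dec Z z) as [|Hn']; auto. exfalso.
    assert (Hl2 : l1 <= lfun S X (2*z)) by (apply l_mono; auto; lra).
    assert (Hq2 : lfun S X (2*z) <= q * (2*z)^2).
    { apply Rmult_le_compat_r with (r := (2*z)^2) in Hz2; [|apply pow2_ge_0].
      unfold Rdiv in Hz2. rewrite Rmult_assoc, Rinv_l, Rmult_1_r in Hz2 by (apply pow_nonzero; lra). exact Hz2. }
    assert (Hqe : q <= e2*e2).
    { unfold q. apply Rmult_le_reg_r with (INR n). lra. unfold Rdiv. rewrite Rmult_assoc, Rinv_l, Rmult_1_r by lra. exact Hxn. }
    rewrite (proj2 He2) in Hqe.
    assert (Hzz : (2*z)^2 < 4*Z^2) by nra.
    assert (q * (2*z)^2 <= q * (4*Z^2)) by (apply Rmult_le_compat_l; lra).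
    assert (q * (4 * Z^2) <= l1 / (8 * Z ^ 2) * (4*Z^2)) by (apply Rmult_le_compat_r; nra).
    replace (l1 / (8 * Z ^ 2) * (4*Z^2)) with (l1/2) in H0 by (field; lra). lra. }
  assert (HLlo : q * z^2 / 4 < L).
  { assert (H := Hz3 (z/2) ltac:(lra) ltac:(lra)).
    assert (Hm : lfun S X (z/2) <= L) by (apply l_mono; auto; lra).
    apply Rmult_lt_compat_r with (r := (z/2)^2) in H; [|nra].
    unfold Rdiv at 2 in H. rewrite Rmult_assoc, Rinv_l, Rmult_1_r in H by (apply pow_nonzero; lra).
    replace (q * z^2/4) with (q * (z/2)^2) by field. lra. }
  assert (HLup : L <= 4 * z^2 * q).
  { assert (Hm : L <= lfun S X (2*z)) by (apply l_mono; auto; lra).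
    apply Rmult_le_compat_r with (r := (2*z)^2) in Hz2; [|apply pow2_ge_0].
    unfold Rdiv in Hz2. rewrite Rmult_assoc, Rinv_l, Rmult_1_r in Hz2 by (apply pow_nonzero; lra). nra. }
  assert (HLp : 0 < L) by nra.
  assert (Hrz : A0 <= rho * z).
  { assert (A0 / rho <= z) by lra. apply Rmult_le_compat_l with (r := rho) in H; [|lra].
    replace (rho * (A0/rho)) with A0 in H by (field; lra). lra. }
  assert (Hlam : forall lam, 0 < lam -> lam^2 <= 4/(delta*z^2) ->
            INR n * (2*lam*Ep S X ((eta/2)/(2*lam))) <= eta * x^2).
  { intros lam Hl Hl2.
    assert (Hls : lam * sd * z <= 2).
    { assert ((lam*sd*z)^2 <= 4).
      { replace ((lam*sd*z)^2) with (lam^2 * (sd*sd) * z^2) by ring. rewrite (proj2 Hsd).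
        apply Rmult_le_compat_r with (r := delta * z^2) in Hl2; [|nra].
        replace (4 / (delta * z ^ 2) * (delta * z ^ 2)) with 4 in Hl2 by (field; nra). nra. }
      assert (0 < lam*sd*z) by (destruct Hsd as [[? ?] ?]; repeat apply Rmult_lt_0_compat; lra). nra. }
    assert (Hk : rho * z <= (eta/2)/(2*lam)).
    { unfold rho. apply Rmult_le_reg_r with (2*lam). lra.
      replace ((eta/2)/(2*lam) * (2*lam)) with (eta/2) by (field; lra).
      replace (eta / 2 * sd / 4 * z * (2 * lam)) with ((eta/4) * (lam*sd*z)) by field. nra. }
    assert (HE1 := Ep_mono S X (rho*z) ((eta/2)/(2*lam)) HX HIII Hk).
    assert (HE2 := HT (rho*z) Hrz).
    assert (HE3 : lfun S X (rho*z) <= L) by (apply l_mono; auto; nra).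
    set (E := Ep S X ((eta/2)/(2*lam))) in *.
    destruct (Ep_fin S X HX HIII ((eta/2)/(2*lam))) as [_ HE0'].
    assert (HEr : E * (rho*z) <= epsT * L).
    { assert (E <= epsT * (lfun S X (rho * z) / (rho * z))) by lra.
      apply Rmult_le_compat_r with (r := rho*z) in H; [|nra].
      replace (epsT * (lfun S X (rho * z) / (rho * z)) * (rho*z)) with (epsT * lfun S X (rho * z)) in H by (field; nra).
      nra. }
    assert (HnL : INR n * L <= 4 * z^2 * x^2).
    { unfold q in HLup. apply Rmult_le_compat_l with (r := INR n) in HLup; [|lra].
      replace (INR n * (4 * z ^ 2 * (x ^ 2 / INR n))) with (4*z^2*x^2) in HLup by (field; lra). lra. }
    assert (Hpos : 0 < sd * rho * z^2) by (destruct Hsd as [[? ?] ?]; apply Rmult_lt_0_compat; [nra|]; apply pow_lt; lra).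
    apply Rmult_le_reg_r with (sd * rho * z^2); auto.
    replace (INR n * (2 * lam * E) * (sd * rho * z ^ 2)) with (2 * (lam * sd * z) * (E * (rho * z)) * INR n) by ring.
    assert (H1 : 2 * (lam * sd * z) * (E * (rho * z)) * INR n <= 2 * 2 * (epsT * L) * INR n).
    { apply Rmult_le_compat_r. lra. assert (0 < lam*sd*z) by (destruct Hsd as [[? ?] ?]; repeat apply Rmult_lt_0_compat; lra). assert (0 <= E*(rho*z)) by (apply Rmult_le_pos; [unfold E; lra|nra]). apply Rmult_le_compat; lra. }
    assert (H2 : 2 * 2 * (epsT * L) * INR n <= 4 * epsT * (4 * z^2 * x^2)).
    { replace (2 * 2 * (epsT * L) * INR n) with (4 * epsT * (INR n * L)) by ring.
      apply Rmult_le_compat_l; lra. }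
    replace (eta * x ^ 2 * (sd * rho * z ^ 2)) with (4 * epsT * (4 * z^2 * x^2)) by (unfold epsT; field).
    lra. }
  set (C0 := -x^2 + (1+eta)^2/2 * x^2).
  set (yk := fun k : nat => delta * INR n * L * (1+eta)^k).
  assert (Hyk : forall k, delta * INR n * L <= yk k).
  { intros k. unfold yk. assert (1 <= (1+eta)^k) by (apply pow_R1_Rle; lra).
    assert (0 < delta * INR n * L) by (repeat apply Rmult_lt_0_compat; lra). nra. }
  assert (Hyk0 : forall k, 0 < yk k) by (intros k; specialize (Hyk k); assert (0 < delta * INR n * L) by (repeat apply Rmult_lt_0_compat; lra); lra).
  set (lk := fun k => x / sqrt (yk k)).
  assert (Hlk : forall k, 0 < lk k /\ lk k ^2 <= 4/(delta*z^2)).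
  { intros k. unfold lk. assert (Hs := sqrt_lt_R0 _ (Hyk0 k)). split. apply Rdiv_lt_0_compat; lra.
    replace ((x / sqrt (yk k))^2) with (x^2 / yk k).
    2:{ unfold Rdiv. rewrite Rpow_mult_distr, pow_inv. f_equal. simpl. rewrite Rmult_1_r, sqrt_sqrt; auto. specialize (Hyk0 k); lra. }
    specialize (Hyk k). specialize (Hyk0 k).
    assert (Hd : delta * x^2 * z^2 / 4 < delta * INR n * L).
    { unfold q in HLlo. apply Rmult_lt_compat_l with (r := delta * INR n) in HLlo; [|nra].
      replace (delta * INR n * (x ^ 2 / INR n * z ^ 2 / 4)) with (delta * x^2 * z^2 / 4) in HLlo by (field; lra). lra. }
    apply Rmult_le_reg_r with (yk k * (delta * z^2)). apply Rmult_lt_0_compat; nra.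
    replace (x ^ 2 / yk k * (yk k * (delta * z ^ 2))) with (x^2 * (delta * z^2)) by (field; lra).
    replace (4 / (delta * z ^ 2) * (yk k * (delta * z ^ 2))) with (4 * yk k) by (field; nra). nra. }
  set (xik := fun k w => exp C0 * Phi (lk k) ((1+eta)/2) n (fun j => Xs j w)).
  assert (Hxik : forall k, Hs S (xik k) /\ Rbar_le (Eh S (xik k)) (Finite (exp (C0 + eta * x^2)))).
  { intros k. destruct (Hlk k) as [Hl1' Hl2']. apply (cell_bound S X Xs HX HXs Hind Hid HE0 HIII eta (lk k) n C0 (eta*x^2)); auto. lra. }
  set (xi := fun w => psum (fun k => xik k w) K).
  apply Rbar_le_trans with (Finite (INR K * exp (C0 + eta * x^2))).
  - apply (Vcap_le S _ xi).
    + split. unfold xi. apply (Hs_psum S xik K). intros k; apply Hxik.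
      intros w. split. apply psum_nonneg. intros k. unfold xik, Phi. left. apply Rmult_lt_0_compat; apply exp_pos.
      intros [HA1 [HA2 HA3]].
      destruct (cells (delta * INR n * L) (1+eta) (V2sum Xs n w) K) as [k [Hk1 Hk2]].
      repeat apply Rmult_lt_0_compat; lra. lra. unfold K; lia.
      { split. exact HA2. assert (0 < INR n * L) by nra. nra. }
      apply Rle_trans with (xik k w).
      * unfold xik, Phi, Gs. rewrite psum_lin. unfold lk.
        apply cell_event; [lra|apply Hyk0|lra|exact Hk2|exact HA1].
      * unfold xi. apply (psum_ge (fun k => xik k w)). intros i. unfold xik, Phi. left. apply Rmult_lt_0_compat; apply exp_pos. exact Hk1.
    + unfold xi. apply (Eh_psum_le S xik K). intros k; apply Hxik. intros k _; apply Hxik.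
  - simpl.
    assert (HKe : INR K <= exp ((eps - 3*eta) * x^2)).
    { eapply Rle_trans with (1 + (eps/4) * x^2).
      { apply Rmult_le_compat_r with (r := eps/4) in HxK; [|lra].
        replace (4 * INR K / eps * (eps/4)) with (INR K) in HxK by (field; lra). lra. }
      eapply Rle_trans. apply exp_ineq1_le. apply exp_mono. assert (0 <= x^2) by apply pow2_ge_0. nra. }
    apply Rle_trans with (exp ((eps - 3*eta) * x^2) * exp (C0 + eta * x^2)).
    { apply Rmult_le_compat_r. left; apply exp_pos. exact HKe. }
    rewrite <- exp_plus. apply exp_mono. unfold C0.
    assert (0 <= x^2) by apply pow2_ge_0.
    assert (eta^2 * x^2 <= eta * x^2) by (apply Rmult_le_compat_r; nra).
    replace ((1 + eta) ^ 2 / 2 * x ^ 2) with (x^2/2 + eta * x^2 + eta^2 * x^2 / 2) by field.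
    replace (x*(x*1)) with (x^2) by ring. assert (0 <= eta^2 * x^2) by (apply Rmult_le_pos; apply pow2_ge_0). lra.
Qed.
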